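(* For $s\in\mathbb{D}^+_{21/4}$ let $r_1(s),r_2(s),r_3(s)$ be the roots of $P_s(u)=u^3/3+u^2+s$ labeled as described in the context. Then: (i) For all $s\in\mathbb{D}^+_{21/4}$ we have $r_3(s),r_1(s)\in\mathbb{D}^-_5$ and $r_2(s)\in\mathbb{D}^+_5$. (ii) Let $\hat{\mathcal{C}}_0$ be the polygon with vertices $-1,\,-1-6i,\,6-6i,\,6+6i,\,-6+6i,\,-6,\,-1$, oriented anticlockwise. Then for $s\in\mathbb{D}^+_{21/4}$, $r_2(s),r_3(s)$ lie in the interior of $\hat{\mathcal{C}}_0$ while $r_1(s)$ lies in its exterior. (iii) For all $s\in\mathbb{D}^+_{21/4}$ the closed path $\mathcal{C}$ (defined in the context) encloses $r_1(s)$ and $r_3(s)$ and leaves $r_2(s)$ outside. Moreover $$\alpha:=\sup_{u\in\mathcal{C},\ s\in\mathbb{D}^+_{21/4}}|J(u,s)|<\infty,\qquad J(u,s)=\int_{u_0}^u R(v,s)\,dv,$$ where the integral is taken along $\mathcal{C}$.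
   Context: $\mathbb{H}$ is the open upper half plane; $\mathbb{D}^+_\rho=\{s\in\mathbb{H}:|s|<\rho\}$ and $\mathbb{D}^-_\rho=\{s\in-\mathbb{H}:|s|<\rho\}$. For $s\in\mathbb{H}$ the polynomial $P_s$ has distinct roots, exactly one of which, $r_2(s)$, lies in $\mathbb{H}$; the other two lie in the lower half plane, $r_1(s)$ having real part $<-2$ and $r_3(s)$ having positive real part. The path $\mathcal{C}$ consists of the polygonal line connecting successively $6,\ \frac{1+i}{3},\ -(1+i),\ -2+\frac{-1+i}{3},\ -3+\frac{i}{3},\ u_0,\ -6$, with $u_0=-4$, closed by the semicircle of radius $6$ centered at the origin in the lower half plane. $R(v,s)=\sqrt{v^3/3+v^2+s}$, taken as a continuous branch along $\mathcal{C}$ starting at $u_0$. *)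

(* Defs.v *)
From Stdlib Require Import Reals.
From Coquelicot Require Import Coquelicot.
Open Scope R_scope.

Definition P (s u : C) : C := (u * u * u / 3 + u * u + s)%C.

Definition DDplus (rho : R) (s : C) : Prop := 0 < Im s /\ Cmod s < rho.
Definition DDminus (rho : R) (s : C) : Prop := Im s < 0 /\ Cmod s < rho.

Definition labelled_roots (s r1 r2 r3 : C) : Prop :=
  (forall u : C, P s u = (/ 3 * ((u - r1) * (u - r2) * (u - r3)))%C) /\
  r1 <> r2 /\ r1 <> r3 /\ r2 <> r3 /\
  0 < Im r2 /\
  Im r1 < 0 /\ Re r1 < -2 /\
  Im r3 < 0 /\ 0 < Re r3.

Definition segment (a b : C) (z : C) : Prop :=
  exists t : R, 0 <= t <= 1 /\ z = (a + RtoC t * (b - a))%C.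

Definition connected_set (A : C -> Prop) : Prop :=
  forall U V : C -> Prop, open U -> open V ->
    (forall z, A z -> U z \/ V z) ->
    (exists z, A z /\ U z) -> (exists z, A z /\ V z) ->
    exists z, A z /\ U z /\ V z.

(** z lies in a bounded connected component of the complement of Gamma. *)
Definition inside (Gamma : C -> Prop) (z : C) : Prop :=
  ~ Gamma z /\
  exists M : R, forall K : C -> Prop,
    connected_set K -> K z -> (forall w, K w -> ~ Gamma w) ->
    forall w, K w -> Cmod w <= M.

(** z lies in an unbounded connected component of the complement of Gamma. *)
Definition outside (Gamma : C -> Prop) (z : C) : Prop :=
  ~ Gamma z /\
  forall M : R, exists K : C -> Prop,
    connected_set K /\ K z /\ (forall w, K w -> ~ Gamma w) /\
    exists w, K w /\ M < Cmod w.

Definition C0hat (z : C) : Prop :=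
  segment (-1, 0) (-1, -6) z \/ segment (-1, -6) (6, -6) z \/
  segment (6, -6) (6, 6) z \/ segment (6, 6) (-6, 6) z \/
  segment (-6, 6) (-6, 0) z \/ segment (-6, 0) (-1, 0) z.

(** Parametrisation of the closed path \mathcal C on [0,7], starting at
    u0 = -4:  [0,1]: segment u0 -> -6;  [1,2]: lower semicircle of radius 6
    from -6 to 6 (6 e^{i pi t});  [2,3],...,[6,7]: the polygonal line
    6 -> (1+i)/3 -> -(1+i) -> -2+(-1+i)/3 -> -3+i/3 -> u0. *)
Definition u0 : C := (-4, 0).
Definition lerp (a b : C) (t : R) : C := (a + RtoC t * (b - a))%C.

Definition v1 : C := (1/3, 1/3).
Definition v2 : C := (-1, -1).
Definition v3 : C := (-2 - 1/3, 1/3).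
Definition v4 : C := (-3, 1/3).

Definition gamma (t : R) : C :=
  if Rle_dec t 1 then lerp u0 (-6, 0) t
  else if Rle_dec t 2 then (6 * cos (PI * t), 6 * sin (PI * t))
  else if Rle_dec t 3 then lerp (6, 0) v1 (t - 2)
  else if Rle_dec t 4 then lerp v1 v2 (t - 3)
  else if Rle_dec t 5 then lerp v2 v3 (t - 4)
  else if Rle_dec t 6 then lerp v3 v4 (t - 5)
  else lerp v4 u0 (t - 6).

(** Its derivative (valid off the break points 1,...,6). *)
Definition dgamma (t : R) : C :=
  if Rle_dec t 1 then ((-6, 0) - u0)%C
  else if Rle_dec t 2 then (- 6 * PI * sin (PI * t), 6 * PI * cos (PI * t))
  else if Rle_dec t 3 then (v1 - (6, 0))%C
  else if Rle_dec t 4 then (v2 - v1)%C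
  else if Rle_dec t 5 then (v3 - v2)%C
  else if Rle_dec t 6 then (v4 - v3)%C
  else (u0 - v4)%C.

Definition Cpath (z : C) : Prop := exists t, 0 <= t <= 7 /\ z = gamma t.

(** A continuous branch of R(v,s) = sqrt(v^3/3+v^2+s) along \mathcal C
    (starting at u0 = gamma 0): a function of the parameter t in [0,7],
    continuous on [0,7], whose square is P_s(gamma t). *)
Definition branch (s : C) (w : R -> C) : Prop :=
  (forall t, 0 <= t <= 7 ->
     filterlim w (within (fun u => 0 <= u <= 7) (locally t)) (locally (w t))) /\
  (forall t, 0 <= t <= 7 -> (w t * w t)%C = P s (gamma t)).

(** J(gamma t, s) = \int_{u0}^{gamma t} R(v,s) dv along \mathcal C. *)
Definition CRInt (f : R -> C) (a b : R) : C :=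
  (RInt (fun x => Re (f x)) a b, RInt (fun x => Im (f x)) a b).
Definition J (w : R -> C) (t : R) : C :=
  CRInt (fun tau => (w tau * dgamma tau)%C) 0 t.

(* Main.v *)
Require Import Defs.
From Stdlib Require Import Reals Lra Psatz Classical.
From Coquelicot Require Import Coquelicot.
Open Scope R_scope.

Lemma P_comp (a b x y : R) : P (a,b) (x,y) =
  (x^3/3 - x*y^2 + x^2 - y^2 + a, x^2*y - y^3/3 + 2*x*y + b).
Proof. unfold P, Cdiv, Cmult, Cplus, Cinv, RtoC; simpl. f_equal; field. Qed.

Lemma Cmod_xy (x y : R) : Cmod (x,y) = sqrt (x*x + y*y).
Proof. unfold Cmod; simpl; f_equal; ring. Qed.

Lemma Cmod_lt_sq (x y r : R) : Cmod (x,y) < r -> x*x + y*y < r*r.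
Proof.
  rewrite Cmod_xy. intros H.
  assert (0 <= sqrt (x*x+y*y)) by apply sqrt_pos.
  assert (Hs := sqrt_sqrt (x*x+y*y)).
  assert (0 <= x*x+y*y) by nra. nra.
Qed.

Lemma Cmod_le_of (x y r : R) : 0 <= r -> x*x + y*y <= r*r -> Cmod (x,y) <= r.
Proof.
  intros Hr H. rewrite Cmod_xy. rewrite <- (sqrt_square r) by lra.
  apply sqrt_le_1_alt. lra.
Qed.

Lemma Cmod_lt_of (x y r : R) : 0 <= r -> x*x + y*y < r*r -> Cmod (x,y) < r.
Proof.
  intros Hr H. rewrite Cmod_xy. rewrite <- (sqrt_square r) by lra.
  apply sqrt_lt_1_alt. nra.
Qed.

Lemma root_bound (a b x y : R) : P (a,b) (x,y) = 0%C ->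
  a*a + b*b < (21/4)*(21/4) -> x*x + y*y < 25.
Proof.
  rewrite P_comp. intros H Hs. injection H; intros H2 H1.
  assert (Ha : a = -(x^3/3 - x*y^2 + x^2 - y^2)) by lra.
  assert (Hb : b = -(x^2*y - y^3/3 + 2*x*y)) by lra.
  set (rho := x*x+y*y).
  assert (Hid : a*a+b*b = rho*rho*(rho+6*x+9)/9) by (subst a b rho; field).
  destruct (Rlt_or_le rho 25) as [Hl|Hge]; [exact Hl|].
  exfalso.
  assert (Hx : 36*(x*x) <= 36*rho) by (unfold rho; nra).
  assert (H6 : (rho+5)*(rho+5) >= 36*rho) by nra.
  assert (Hx2 : 6*x >= -(rho+5)) by nra.
  assert (rho + 6*x + 9 >= 4) by lra.
  assert (rho*rho >= 625) by nra.
  nra.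
Qed.

Lemma root_im (a b x y : R) : P (a,b) (x,y) = 0%C -> 0 < b -> 0 < y ->
  x*x + 2*x < y*y/3.
Proof.
  rewrite P_comp. intros H Hb Hy. injection H; intros H2 H1.
  assert (y*(x*x+2*x-y*y/3) < 0) by nra. nra.
Qed.

Lemma labelled_zero s r1 r2 r3 : labelled_roots s r1 r2 r3 ->
  P s r1 = 0%C /\ P s r2 = 0%C /\ P s r3 = 0%C.
Proof.
  intros [H _]. rewrite !H. repeat split; ring.
Qed.

Lemma lerp_comp (ax ay bx by' p : R) :
  lerp (ax,ay) (bx,by') p = (ax + p*(bx-ax), ay + p*(by'-ay)).
Proof. unfold lerp, RtoC, Cmult, Cplus, Cminus, Copp; simpl. f_equal; ring. Qed.

Definition G0 t := lerp u0 (-6, 0) t.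
Definition G1 t : C := (6 * cos (PI * t), 6 * sin (PI * t)).
Definition G2 t := lerp (6, 0) v1 (t - 2).
Definition G3 t := lerp v1 v2 (t - 3).
Definition G4 t := lerp v2 v3 (t - 4).
Definition G5 t := lerp v3 v4 (t - 5).
Definition G6 t := lerp v4 u0 (t - 6).

Lemma G0c t : G0 t = (-4 - 2*t, 0).
Proof. unfold G0, u0. rewrite lerp_comp. f_equal; ring. Qed.
Lemma G2c t : G2 t = (6 - 17/3*(t-2), (t-2)/3).
Proof. unfold G2, v1. rewrite lerp_comp. f_equal; field. Qed.
Lemma G3c t : G3 t = (1/3 - 4/3*(t-3), 1/3 - 4/3*(t-3)).
Proof. unfold G3, v1, v2. rewrite lerp_comp. f_equal; field. Qed.
Lemma G4c t : G4 t = (-1 - 4/3*(t-4), -1 + 4/3*(t-4)).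
Proof. unfold G4, v2, v3. rewrite lerp_comp. f_equal; field. Qed.
Lemma G5c t : G5 t = (-7/3 - 2/3*(t-5), 1/3).
Proof. unfold G5, v3, v4. rewrite lerp_comp. f_equal; field. Qed.
Lemma G6c t : G6 t = (-3 - (t-6), 1/3 - (t-6)/3).
Proof. unfold G6, v4, u0. rewrite lerp_comp. f_equal; field. Qed.

Lemma cos_PI1 : cos (PI * 1) = -1. Proof. rewrite Rmult_1_r. apply cos_PI. Qed.
Lemma sin_PI1 : sin (PI * 1) = 0. Proof. rewrite Rmult_1_r. apply sin_PI. Qed.
Lemma cos_PI2 : cos (PI * 2) = 1. Proof. rewrite Rmult_comm. apply cos_2PI. Qed.
Lemma sin_PI2 : sin (PI * 2) = 0. Proof. rewrite Rmult_comm. apply sin_2PI. Qed.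

Ltac gsolve := unfold gamma; repeat (destruct Rle_dec); try lra.

Lemma gamma_0 t : 0 <= t <= 1 -> gamma t = G0 t.
Proof. intros; gsolve; reflexivity. Qed.
Lemma gamma_1 t : 1 <= t <= 2 -> gamma t = G1 t.
Proof.
  intros; gsolve; try reflexivity.
  assert (t = 1) by lra; subst. fold (G0 1). rewrite G0c. unfold G1.
  rewrite cos_PI1, sin_PI1. f_equal; ring.
Qed.
Lemma gamma_2 t : 2 <= t <= 3 -> gamma t = G2 t.
Proof.
  intros; gsolve; try reflexivity.
  assert (t = 2) by lra; subst. rewrite G2c. rewrite cos_PI2, sin_PI2. f_equal; field.
Qed.
Lemma gamma_3 t : 3 <= t <= 4 -> gamma t = G3 t.
Proof.
  intros; gsolve; try reflexivity.
  assert (t = 3) by lra; subst. fold (G2 3). rewrite G2c, G3c. f_equal; field.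
Qed.
Lemma gamma_4 t : 4 <= t <= 5 -> gamma t = G4 t.
Proof.
  intros; gsolve; try reflexivity.
  assert (t = 4) by lra; subst. fold (G3 4). rewrite G3c, G4c. f_equal; field.
Qed.
Lemma gamma_5 t : 5 <= t <= 6 -> gamma t = G5 t.
Proof.
  intros; gsolve; try reflexivity.
  assert (t = 5) by lra; subst. fold (G4 5). rewrite G4c, G5c. f_equal; field.
Qed.
Lemma gamma_6 t : 6 <= t <= 7 -> gamma t = G6 t.
Proof.
  intros; gsolve; try reflexivity.
  assert (t = 6) by lra; subst. fold (G5 6). rewrite G5c, G6c. f_equal; field.
Qed.

Definition onPiece (x y : R) : Prop :=
  (exists p, 0 <= p <= 1 /\ x = -4 - 2*p /\ y = 0) \/
  (x*x + y*y = 36 /\ y <= 0) \/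
  (exists p, 0 <= p <= 1 /\ x = 6 - 17/3*p /\ y = p/3) \/
  (exists p, 0 <= p <= 1 /\ x = 1/3 - 4/3*p /\ y = 1/3 - 4/3*p) \/
  (exists p, 0 <= p <= 1 /\ x = -1 - 4/3*p /\ y = -1 + 4/3*p) \/
  (exists p, 0 <= p <= 1 /\ x = -7/3 - 2/3*p /\ y = 1/3) \/
  (exists p, 0 <= p <= 1 /\ x = -3 - p /\ y = 1/3 - p/3).

Lemma Cpath_onPiece x y : Cpath (x,y) -> onPiece x y.
Proof.
  intros [t [Ht E]]. unfold onPiece.
  destruct (Rle_lt_dec t 1).
  { rewrite gamma_0 in E by lra. rewrite G0c in E. injection E; intros.
    left. exists t. repeat split; lra. }
  destruct (Rle_lt_dec t 2).
  { rewrite gamma_1 in E by lra. unfold G1 in E. injection E; intros.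
    right; left. subst. split.
    - assert (Hs := sin2_cos2 (PI*t)). unfold Rsqr in Hs. nra.
    - assert (sin (PI*t) <= 0). { apply sin_le_0; assert (0 < PI) by apply PI_RGT_0; nra. }
      lra. }
  destruct (Rle_lt_dec t 3).
  { rewrite gamma_2 in E by lra. rewrite G2c in E. injection E; intros.
    do 2 right; left. exists (t-2). repeat split; lra. }
  destruct (Rle_lt_dec t 4).
  { rewrite gamma_3 in E by lra. rewrite G3c in E. injection E; intros.
    do 3 right; left. exists (t-3). repeat split; lra. }
  destruct (Rle_lt_dec t 5).
  { rewrite gamma_4 in E by lra. rewrite G4c in E. injection E; intros.
    do 4 right; left. exists (t-4). repeat split; lra. }
  destruct (Rle_lt_dec t 6).
  { rewrite gamma_5 in E by lra. rewrite G5c in E. injection E; intros.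
    do 5 right; left. exists (t-5). repeat split; lra. }
  { rewrite gamma_6 in E by lra. rewrite G6c in E. injection E; intros.
    do 6 right. exists (t-6). repeat split; lra. }
Qed.

Lemma semi_Cpath x y : x*x + y*y = 36 -> y <= 0 -> Cpath (x,y).
Proof.
  intros H Hy.
  assert (Hx : -1 <= x/6 <= 1) by (split; nra).
  set (a := acos (x/6)).
  assert (Ha := acos_bound (x/6)). fold a in Ha.
  assert (HPI : 0 < PI) by apply PI_RGT_0.
  exists (2 - a/PI). split.
  { split.
    - assert (a/PI <= 1). { apply Rmult_le_reg_r with PI; auto. field_simplify; lra. }
      lra.
    - assert (0 <= a/PI) by (apply Rdiv_le_0_compat; lra). lra. }
  rewrite gamma_1.
  2:{ split.
    - assert (a/PI <= 1). { apply Rmult_le_reg_r with PI; auto. field_simplify; lra. }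
      lra.
    - assert (0 <= a/PI) by (apply Rdiv_le_0_compat; lra). lra. }
  unfold G1.
  replace (PI * (2 - a/PI)) with (- a + 2 * PI) by (field; lra).
  rewrite cos_plus, sin_plus, cos_neg, sin_neg.
  replace (2*PI) with (PI*2) by ring.
  rewrite cos_PI2, sin_PI2. unfold a. rewrite cos_acos by lra. rewrite sin_acos by lra.
  assert (E : 1 - (x/6)² = Rsqr (-y/6)) by (unfold Rsqr; field_simplify; nra).
  rewrite E, sqrt_Rsqr by lra. f_equal; field.
Qed.

Lemma seg_Cpath j G x y p : (forall t, j <= t <= j+1 -> gamma t = G t) ->
  0 <= j -> j + 1 <= 7 -> 0 <= p <= 1 -> G (j+p) = (x,y) -> Cpath (x,y).
Proof.
  intros HG Hj Hj7 Hp E. exists (j+p). split; [lra|]. rewrite HG by lra. auto.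
Qed.

Lemma onPiece_Cpath x y : onPiece x y -> Cpath (x,y).
Proof.
  intros [H|[H|[H|[H|[H|[H|H]]]]]];
    try (destruct H as [p [Hp [-> ->]]]); [| destruct H as [H Hy] | | | | |].
  - apply (seg_Cpath 0 G0 _ _ p); try lra. intros; apply gamma_0; lra.
    rewrite G0c. f_equal; ring.
  - apply semi_Cpath; auto.
  - apply (seg_Cpath 2 G2 _ _ p); try lra. intros; apply gamma_2; lra.
    rewrite G2c. f_equal; field.
  - apply (seg_Cpath 3 G3 _ _ p); try lra. intros; apply gamma_3; lra.
    rewrite G3c. f_equal; field.
  - apply (seg_Cpath 4 G4 _ _ p); try lra. intros; apply gamma_4; lra.
    rewrite G4c. f_equal; field.
  - apply (seg_Cpath 5 G5 _ _ p); try lra. intros; apply gamma_5; lra.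
    rewrite G5c. f_equal; field.
  - apply (seg_Cpath 6 G6 _ _ p); try lra. intros; apply gamma_6; lra.
    rewrite G6c. f_equal; field.
Qed.

Section Cont.
Context {U : UniformSpace}.
Lemma c_plus (f g : U -> R) z : continuous f z -> continuous g z ->
  continuous (fun w => f w + g w) z.
Proof. apply (continuous_plus f g). Qed.
Lemma c_mult (f g : U -> R) z : continuous f z -> continuous g z ->
  continuous (fun w => f w * g w) z.
Proof. apply (continuous_mult f g). Qed.
Lemma c_opp (f : U -> R) z : continuous f z -> continuous (fun w => - f w) z.
Proof. apply (continuous_opp f). Qed.
Lemma c_minus (f g : U -> R) z : continuous f z -> continuous g z ->
  continuous (fun w => f w - g w) z.
Proof. intros; unfold Rminus. apply c_plus; auto. apply c_opp; auto. Qed.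
Lemma c_const (c : R) z : continuous (fun _ : U => c) z.
Proof. apply continuous_const. Qed.
End Cont.

Lemma c_fst (z : C_UniformSpace) : @continuous C_UniformSpace R_UniformSpace fst z.
Proof. destruct z. apply continuous_fst. Qed.
Lemma c_snd (z : C_UniformSpace) : @continuous C_UniformSpace R_UniformSpace snd z.
Proof. destruct z. apply continuous_snd. Qed.

Ltac cont_tac := match goal with
  | |- continuous (fun _ => ?c) _ => (apply c_const || apply continuous_const)
  | |- continuous fst _ => apply c_fst
  | |- continuous snd _ => apply c_snd
  | |- continuous (fun w => fst w) _ => apply c_fst
  | |- continuous (fun w => snd w) _ => apply c_snd
  | |- continuous (fun w => _ + _) _ => apply c_plus; cont_tac
  | |- continuous (fun w => _ - _) _ => apply c_minus; cont_tac
  | |- continuous (fun w => _ * _) _ => apply c_mult; cont_tac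
  | |- continuous (fun w => - _) _ => apply c_opp; cont_tac
  end.

Lemma open_lt_f (F G : C -> R) : (forall z, continuous F z) -> (forall z, continuous G z) ->
  open (fun z => F z < G z).
Proof.
  intros HF HG.
  apply (open_ext (fun z => 0 < G z - F z)). { intros z; split; intros; lra. }
  apply (open_comp (fun z => G z - F z) (fun u => 0 < u)).
  - intros z _. apply c_minus; auto.
  - apply open_gt.
Qed.

Ltac open_tac := match goal with
  | |- open (fun x => _ /\ _) => apply open_and; open_tac
  | |- open (fun x => _ \/ _) => apply open_or; open_tac
  | |- open (fun x => _ < _) => apply open_lt_f; intros; cont_tac
  end.

Lemma inside_of (Gamma Uin Vout : C -> Prop) (M : R) (z : C) :
  open Uin -> open Vout -> (forall w, Uin w -> Vout w -> False) ->
  (forall w, ~ Gamma w -> Uin w \/ Vout w) -> (forall w, Uin w -> Cmod w <= M) ->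
  Uin z -> ~ Gamma z -> inside Gamma z.
Proof.
  intros HU HV Hd Hc HM Hz Hg. split; auto. exists M.
  intros K HK Kz KG w Kw.
  destruct (Hc w (KG w Kw)) as [Hw|Hw]; [auto|].
  exfalso.
  destruct (HK Uin Vout HU HV) as [y [Ky [Uy Vy]]].
  - intros y Ky. apply Hc, KG, Ky.
  - exists z; auto.
  - exists w; auto.
  - eapply Hd; eauto.
Qed.

Definition U0 (z : C) : Prop :=
  (-6 < fst z /\ fst z < 6) /\ (-6 < snd z /\ snd z < 6) /\ (-1 < fst z \/ 0 < snd z).
Definition V0 (z : C) : Prop :=
  fst z < -6 \/ 6 < fst z \/ snd z < -6 \/ 6 < snd z \/ (fst z < -1 /\ snd z < 0).

Lemma U0_open : open U0.
Proof. unfold U0. open_tac. Qed.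
Lemma V0_open : open V0.
Proof. unfold V0. open_tac. Qed.


Lemma seg_iff ax ay bx by' x y : segment (ax,ay) (bx,by') (x,y) <->
  exists t, 0 <= t <= 1 /\ x = ax + t*(bx-ax) /\ y = ay + t*(by'-ay).
Proof.
  unfold segment. split; intros [t [Ht E]]; exists t; split; auto.
  - unfold RtoC, Cmult, Cplus, Cminus, Copp in E; simpl in E.
    injection E; intros; split; lra.
  - unfold RtoC, Cmult, Cplus, Cminus, Copp; simpl.
    destruct E as [-> ->]. f_equal; ring.
Qed.

Lemma C0hat_notU0 z : C0hat z -> ~ U0 z.
Proof.
  destruct z as [x y]. unfold C0hat; rewrite !seg_iff. unfold U0; simpl.
  intros H; decompose [or ex and] H; lra.
Qed.

Lemma UV0_disj z : U0 z -> V0 z -> False.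
Proof. destruct z; unfold U0, V0; simpl; lra. Qed.

Lemma UV0_cover z : ~ C0hat z -> U0 z \/ V0 z.
Proof.
  destruct z as [x y]. intros H.
  destruct (classic (U0 (x,y))) as [?|HU]; [left; auto|].
  destruct (classic (V0 (x,y))) as [?|HV]; [right; auto|].
  exfalso; apply H. unfold C0hat; rewrite !seg_iff. unfold U0, V0 in *; simpl in *.
  destruct (Req_dec x 6).
  { do 2 right; left. exists ((y+6)/12). repeat split; lra. }
  destruct (Req_dec x (-6)).
  { do 4 right; left. exists ((6-y)/6). repeat split; lra. }
  destruct (Req_dec y 6).
  { do 3 right; left. exists ((6-x)/12). repeat split; lra. }
  destruct (Req_dec y (-6)).
  { right; left. exists ((x+1)/7). repeat split; lra. }
  destruct (Req_dec x (-1)).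
  { left. exists (-y/6). repeat split; lra. }
  do 5 right. exists ((x+6)/5). repeat split; lra.
Qed.

Lemma U0_bound z : U0 z -> Cmod z <= 9.
Proof.
  destruct z as [x y]; unfold U0; simpl; intros H.
  apply Cmod_le_of; nra.
Qed.

Definition U1 (z : C) : Prop :=
  (snd z < 0 /\ fst z * fst z + snd z * snd z < 36 /\ (snd z < fst z \/ snd z < - fst z - 2)) \/
  (snd z < fst z /\ 17 * snd z < 6 - fst z /\ fst z * fst z + snd z * snd z < 36 /\ -1 < snd z) \/
  (snd z < - fst z - 2 /\ 3 * snd z < 1 /\ 3 * snd z < fst z + 4 /\ fst z * fst z + snd z * snd z < 36).
Definition V1 (z : C) : Prop :=
  36 < fst z * fst z + snd z * snd z \/
  (0 < snd z /\ (fst z < snd z \/ 6 - fst z < 17 * snd z) /\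
     (- fst z - 2 < snd z \/ 1 < 3 * snd z \/ fst z + 4 < 3 * snd z)) \/
  (fst z < snd z /\ - fst z - 2 < snd z /\ snd z < 1).

Lemma U1_open : open U1.
Proof. unfold U1. open_tac. Qed.
Lemma V1_open : open V1.
Proof. unfold V1. open_tac. Qed.

Lemma UV1_disj z : U1 z -> V1 z -> False.
Proof. destruct z as [x y]; unfold U1, V1; simpl; intros H1 H2. decompose [or and] H1; decompose [or and] H2; lra. Qed.

Lemma Cpath_notU1 z : Cpath z -> ~ U1 z.
Proof.
  destruct z as [x y]. intros H. apply Cpath_onPiece in H. unfold onPiece in H.
  unfold U1; simpl. intros H1.
  decompose [or ex and] H; subst; decompose [or and] H1; nra.
Qed.

Lemma UV1_cover z : ~ Cpath z -> U1 z \/ V1 z.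
Proof.
  destruct z as [x y]. intros H.
  destruct (classic (U1 (x,y))) as [?|HU]; [left; auto|].
  destruct (classic (V1 (x,y))) as [?|HV]; [right; auto|].
  exfalso; apply H. apply onPiece_Cpath. unfold onPiece. unfold U1, V1 in *; simpl in *.
  destruct (Rlt_le_dec 0 y) as [Hy|Hy].
  - destruct (Rle_lt_dec y x) as [Hyx|Hyx].
    + destruct (Rle_lt_dec (17*y) (6-x)).
      {
        destruct (Req_dec y x).
        - do 3 right; left. exists ((1-3*x)/4). repeat split; lra.
        - do 2 right; left. exists (3*y). repeat split; try lra.
          assert (~ (y < x /\ 17 * y < 6 - x /\ x * x + y * y < 36 /\ -1 < y)) by tauto.
          destruct (Req_dec (17*y) (6-x)); [lra|]. exfalso. apply H1. repeat split; nra. }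
      { exfalso. apply HV. right; left. split; [lra|]. split; [lra|].
        destruct (Rlt_le_dec (-x-2) y); [left; lra|]. destruct (Rlt_le_dec 1 (3*y)); [right; left; lra|].
        destruct (Rlt_le_dec (x+4) (3*y)); [right; right; lra|]. nra. }
    +
      destruct (Rle_lt_dec y (-x-2)) as [Hb|Hb].
      * destruct (Rle_lt_dec (3*y) 1) as [Hb2|Hb2].
        2:{ exfalso. apply HV. right; left. repeat split; lra. }
        destruct (Rle_lt_dec (3*y) (x+4)) as [Hb3|Hb3].
        2:{ exfalso. apply HV. right; left. repeat split; lra. }
        destruct (Req_dec y (-x-2)).
        { do 4 right; left. exists (3*(y+1)/4). repeat split; lra. }
        destruct (Req_dec (3*y) 1).
        { do 5 right; left. exists ((-7/3 - x)*3/2). repeat split; lra. }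
        destruct (Req_dec (3*y) (x+4)).
        { do 6 right. exists (-3-x). repeat split; lra. }
        exfalso. apply HU. right; right. repeat split; nra.
      * exfalso. apply HV. right; left. repeat split; lra.
  - destruct (Rle_lt_dec (x*x+y*y) 36) as [Hr|Hr]; [|exfalso; apply HV; left; lra].
    destruct (Req_dec (x*x+y*y) 36). { right; left. split; lra. }
    destruct (Req_dec y 0) as [Hy0|Hy0].
    + subst y. destruct (Rle_lt_dec 0 x).
      * destruct (Req_dec x 0).
        { do 3 right; left. exists (1/4). repeat split; lra. }
        exfalso. apply HU. right; left. repeat split; nra.
      * destruct (Rle_lt_dec x (-2)).
        2:{ exfalso; apply HV. right; right. repeat split; lra. }
        destruct (Req_dec x (-2)).
        { do 4 right; left. exists (3/4). repeat split; lra. }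
        destruct (Rle_lt_dec x (-4)).
        { left. exists ((-4-x)/2). repeat split; nra. }
        exfalso. apply HU. right; right. repeat split; nra.
    + assert (y < 0) by lra.
      destruct (Rlt_le_dec y x).
      * destruct (Rlt_le_dec y (-x-2)).
        -- exfalso; apply HU; left; repeat split; lra.
        -- exfalso; apply HU; left; repeat split; lra.
      * destruct (Rlt_le_dec y (-x-2)).
        -- exfalso; apply HU; left; repeat split; lra.
        -- destruct (Req_dec y x).
           { do 3 right; left. exists ((1-3*x)/4). repeat split; lra. }
           destruct (Req_dec y (-x-2)).
           { do 4 right; left. exists (3*(y+1)/4). repeat split; lra. }
           exfalso. apply HV. right; right. repeat split; lra.
Qed.

Lemma U1_bound z : U1 z -> Cmod z <= 6.
Proof.
  destruct z as [x y]; unfold U1; simpl; intros H.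
  apply Cmod_le_of; [lra|]. decompose [or and] H; nra.
Qed.

Definition ropen (P : R -> Prop) := forall t, P t -> exists e, 0 < e /\ forall s, Rabs (s - t) < e -> P s.

Lemma interval_conn (Pu Pv : R -> Prop) a b : a <= b -> ropen Pu -> ropen Pv ->
  (forall t, a <= t <= b -> Pu t \/ Pv t) -> Pu a -> Pv b ->
  exists t, a <= t <= b /\ Pu t /\ Pv t.
Proof.
  intros Hab HU HV Hc Ha Hb.
  set (E := fun t => a <= t <= b /\ forall s, a <= s <= t -> Pu s).
  assert (HEb : bound E). { exists b. intros t [Ht _]. lra. }
  assert (HEa : exists x, E x). { exists a. split; [lra|]. intros s Hs. replace s with a by lra; auto. }
  destruct (completeness E HEb HEa) as [c [Hub Hlub]].
  assert (Hac : a <= c). { apply Hub. destruct HEa. unfold E. split; [lra|]. intros s Hs. replace s with a by lra; auto. }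
  assert (Hcb : c <= b). { apply Hlub. intros t [Ht _]. lra. }
  assert (Hbelow : forall s, a <= s < c -> Pu s).
  { intros s Hs. apply NNPP. intros Hn.
    assert (c <= s). { apply Hlub. intros t [Ht Hall]. destruct (Rle_lt_dec t s); auto.
      exfalso. apply Hn. apply Hall. lra. }
    lra. }
  destruct (Hc c (conj Hac Hcb)) as [Hu|Hv].
  - destruct (Req_dec c b) as [Ecb|Ncb].
    + exists b. split; [lra|]. subst c. auto.
    + exfalso. destruct (HU c Hu) as [e [He Hball]].
      set (t' := Rmin (c + e/2) b).
      assert (E t'). { unfold E, t'. split. { split; [apply Rmin_case; lra|apply Rmin_r]. }
        intros s Hs. destruct (Rlt_le_dec s c). { apply Hbelow; lra. }
        apply Hball. assert (s <= c + e/2) by (eapply Rle_trans; [apply Hs|apply Rmin_l]).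
        rewrite Rabs_right; lra. }
      assert (t' <= c) by (apply Hub; auto).
      unfold t' in *. revert H0. apply Rmin_case; lra.
  - destruct (Req_dec c a) as [Eca|Nca].
    + exists a. split; [lra|]. subst c. auto.
    + destruct (HV c Hv) as [e [He Hball]].
      set (t' := Rmax (c - e/2) a).
      assert (t' < c) by (unfold t'; apply Rmax_case; lra).
      assert (a <= t') by (unfold t'; apply Rmax_r).
      assert (c - e/2 <= t') by (unfold t'; apply Rmax_l).
      exists t'. split; [lra|]. split. { apply Hbelow; lra. }
      apply Hball. rewrite Rabs_left; lra.
Qed.

Definition ray_set (x0 y0 dx dy T : R) (w : C) : Prop :=
  exists t, 0 <= t <= T /\ w = (x0 + t*dx, y0 + t*dy).

Lemma open_pull (U : C -> Prop) x0 y0 dx dy : open U ->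
  ropen (fun t => U (x0 + t*dx, y0 + t*dy)).
Proof.
  intros HU t Ht. destruct (HU _ Ht) as [eps Heps].
  exists (eps / (Rabs dx + Rabs dy + 1)). split.
  { apply Rdiv_lt_0_compat. apply cond_pos. assert (0 <= Rabs dx) by apply Rabs_pos. assert (0 <= Rabs dy) by apply Rabs_pos. lra. }
  intros s Hs. apply Heps.
  assert (0 <= Rabs dx) by apply Rabs_pos. assert (0 <= Rabs dy) by apply Rabs_pos.
  assert (Hd : 0 < Rabs dx + Rabs dy + 1) by lra.
  assert (He : Rabs (s - t) * (Rabs dx + Rabs dy + 1) < eps).
  { apply Rmult_lt_reg_r with (/ (Rabs dx + Rabs dy + 1)). apply Rinv_0_lt_compat; lra.
    rewrite Rmult_assoc, Rinv_r by lra. rewrite Rmult_1_r. exact Hs. }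
  assert (0 <= Rabs (s - t)) by apply Rabs_pos.
  split.
  - change (Rabs (x0 + s*dx - (x0 + t*dx)) < eps).
    replace (x0 + s*dx - (x0 + t*dx)) with ((s-t)*dx) by ring. rewrite Rabs_mult. nra.
  - change (Rabs (y0 + s*dy - (y0 + t*dy)) < eps).
    replace (y0 + s*dy - (y0 + t*dy)) with ((s-t)*dy) by ring. rewrite Rabs_mult. nra.
Qed.

Lemma ray_connected x0 y0 dx dy T : 0 <= T -> connected_set (ray_set x0 y0 dx dy T).
Proof.
  intros HT U V HU HV Hc [z1 [[t1 [Ht1 E1]] Uz]] [z2 [[t2 [Ht2 E2]] Vz]]. subst z1 z2.
  destruct (Rle_lt_dec t1 t2).
  - destruct (interval_conn (fun t => U (x0 + t*dx, y0 + t*dy)) (fun t => V (x0 + t*dx, y0 + t*dy)) t1 t2)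
      as [t [Ht [Hu Hv]]]; auto using open_pull.
    + intros t Ht. apply Hc. exists t. split; [lra|auto].
    + exists (x0 + t*dx, y0 + t*dy). split; auto. exists t; split; [lra|auto].
  - destruct (interval_conn (fun t => V (x0 + t*dx, y0 + t*dy)) (fun t => U (x0 + t*dx, y0 + t*dy)) t2 t1)
      as [t [Ht [Hu Hv]]]; auto using open_pull; try lra.
    + intros t Ht. destruct (Hc (x0 + t*dx, y0 + t*dy)); auto. exists t. split; [lra|auto].
    + exists (x0 + t*dx, y0 + t*dy). split; auto. exists t; split; [lra|auto].
Qed.

Lemma outside_ray (Gamma : C -> Prop) x0 y0 dx dy :
  (forall t, 0 <= t -> ~ Gamma (x0 + t*dx, y0 + t*dy)) ->
  (forall M, exists T, 0 <= T /\ M < Cmod (x0 + T*dx, y0 + T*dy)) ->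
  outside Gamma (x0, y0).
Proof.
  intros Hav Hfar. split.
  { intros H. apply (Hav 0 (Rle_refl 0)). replace (x0 + 0*dx, y0 + 0*dy) with (x0,y0) by (f_equal; ring). auto. }
  intros M. destruct (Hfar M) as [T [HT HM]].
  exists (ray_set x0 y0 dx dy T). split; [apply ray_connected; auto|].
  split. { exists 0. split; [lra|]. f_equal; ring. }
  split. { intros w [t [Ht ->]]. apply Hav; lra. }
  exists (x0 + T*dx, y0 + T*dy). split; auto. exists T. split; [lra|auto].
Qed.

Lemma im_le_Cmod (z : C) : Rabs (snd z) <= Cmod z.
Proof. eapply Rle_trans; [|apply Rmax_Cmod]. apply Rmax_r. Qed.
Lemma re_le_Cmod' (z : C) : Rabs (fst z) <= Cmod z.
Proof. eapply Rle_trans; [|apply Rmax_Cmod]. apply Rmax_l. Qed.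

Lemma Cpath_ray_r2 x y t : 0 < y -> x*x + 2*x < y*y/3 -> x*x+y*y < 25 -> 0 <= t ->
  ~ Cpath (x + t*0, y + t*1).
Proof.
  intros Hy Hr Hb Ht H. apply Cpath_onPiece in H. unfold onPiece in H.
  decompose [or ex and] H; clear H.
  - lra.
  - lra.
  - assert (x = 6 - 17/3 * x0) by lra. assert (y <= x0/3) by lra. nra.
  - assert (x = 1/3 - 4/3 * x0) by lra. assert (y <= 1/3 - 4/3*x0) by lra. nra.
  - assert (x = -1 - 4/3 * x0) by lra. assert (y <= -1 + 4/3*x0) by lra. nra.
  - assert (x = -7/3 - 2/3 * x0) by lra. assert (y <= 1/3) by lra. nra.
  - assert (x = -3 - x0) by lra. assert (y <= 1/3 - x0/3) by lra. nra.
Qed.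

Lemma part1 (s r1 r2 r3 : C) : DDplus (21/4) s -> labelled_roots s r1 r2 r3 ->
     (DDminus 5 r3 /\ DDminus 5 r1 /\ DDplus 5 r2) /\
     (inside C0hat r2 /\ inside C0hat r3 /\ outside C0hat r1) /\
     (inside Cpath r1 /\ inside Cpath r3 /\ outside Cpath r2).
Proof.
  intros Hs HL. destruct (labelled_zero _ _ _ _ HL) as [Z1 [Z2 Z3]].
  destruct HL as [_ [_ [_ [_ [I2 [I1 [R1 [I3 R3]]]]]]]].
  destruct s as [a b]. destruct r1 as [x1 y1]. destruct r2 as [x2 y2]. destruct r3 as [x3 y3].
  destruct Hs as [Hb Hm]. simpl in *.
  apply Cmod_lt_sq in Hm.
  assert (B1 := root_bound _ _ _ _ Z1 Hm).
  assert (B2 := root_bound _ _ _ _ Z2 Hm).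
  assert (B3 := root_bound _ _ _ _ Z3 Hm).
  assert (Q2 := root_im _ _ _ _ Z2 Hb I2).
  assert (M1 : Cmod (x1,y1) < 5) by (apply Cmod_lt_of; lra).
  assert (M2 : Cmod (x2,y2) < 5) by (apply Cmod_lt_of; lra).
  assert (M3 : Cmod (x3,y3) < 5) by (apply Cmod_lt_of; lra).
  split; [|split].
  - unfold DDminus, DDplus; simpl. repeat split; lra.
  - split; [|split].
    + apply (inside_of C0hat U0 V0 9); [exact U0_open|exact V0_open|exact UV0_disj|exact UV0_cover|exact U0_bound| |].
      * unfold U0; simpl. split; [split; nra|split; [split; nra|right; lra]].
      * intros H. apply (C0hat_notU0 _ H). unfold U0; simpl. split; [split; nra|split; [split; nra|right; lra]].
    + apply (inside_of C0hat U0 V0 9); [exact U0_open|exact V0_open|exact UV0_disj|exact UV0_cover|exact U0_bound| |].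
      * unfold U0; simpl. split; [split; nra|split; [split; nra|left; lra]].
      * intros H. apply (C0hat_notU0 _ H). unfold U0; simpl. split; [split; nra|split; [split; nra|left; lra]].
    + apply (outside_ray C0hat x1 y1 (-1) 0).
      * intros t Ht H. unfold C0hat in H; rewrite !seg_iff in H.
        assert (y1*y1 < 25) by nra. assert (-5 < y1) by nra.
        decompose [or ex and] H; lra.
      * intros M. exists (Rabs M + 10). split; [assert (0 <= Rabs M) by apply Rabs_pos; lra|].
        eapply Rlt_le_trans; [|apply re_le_Cmod']. simpl.
        assert (x1*x1 < 25) by nra. assert (-5 < x1 < 5) by (split; nra).
        assert (M <= Rabs M) by apply RRle_abs.
        rewrite Rabs_left; [lra|]. assert (0 <= Rabs M) by apply Rabs_pos. lra.
  - split; [|split].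
    + apply (inside_of Cpath U1 V1 6); [exact U1_open|exact V1_open|exact UV1_disj|exact UV1_cover|exact U1_bound| |].
      * unfold U1; simpl. left. repeat split; lra.
      * intros H. apply (Cpath_notU1 _ H). unfold U1; simpl. left. repeat split; lra.
    + apply (inside_of Cpath U1 V1 6); [exact U1_open|exact V1_open|exact UV1_disj|exact UV1_cover|exact U1_bound| |].
      * unfold U1; simpl. left. repeat split; lra.
      * intros H. apply (Cpath_notU1 _ H). unfold U1; simpl. left. repeat split; lra.
    + apply (outside_ray Cpath x2 y2 0 1).
      * intros t Ht. apply Cpath_ray_r2; auto.
      * intros M. exists (Rabs M + 10). split; [assert (0 <= Rabs M) by apply Rabs_pos; lra|].
        eapply Rlt_le_trans; [|apply im_le_Cmod]. simpl.
        assert (M <= Rabs M) by apply RRle_abs.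
        rewrite Rabs_right; [lra|]. assert (0 <= Rabs M) by apply Rabs_pos. lra.
Qed.

Definition nrm (z : C) : R := sqrt (fst z * fst z + snd z * snd z).
Definition good (z : C) : Prop := 0 < nrm z + fst z.
Definition sqa (z : C) : R := sqrt ((nrm z + fst z) / 2).
Definition Fs (z : C) : C := (sqa z, snd z / (2 * sqa z)).

Lemma nrm_ge (z : C) : Rabs (fst z) <= nrm z.
Proof.
  unfold nrm. rewrite <- sqrt_Rsqr_abs. apply sqrt_le_1_alt. unfold Rsqr.
  assert (0 <= snd z * snd z) by nra. lra.
Qed.
Lemma nrm_sq (z : C) : nrm z * nrm z = fst z * fst z + snd z * snd z.
Proof. unfold nrm. apply sqrt_sqrt. nra. Qed.

Lemma Fs_sq z : good z -> (Fs z * Fs z)%C = z.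
Proof.
  destruct z as [x y]. unfold good, Fs, sqa; simpl. intros H.
  set (n := nrm (x,y)) in *.
  assert (Hn : n * n = x*x + y*y) by apply nrm_sq.
  assert (Ha : 0 < (n + x)/2) by lra.
  assert (Hs := sqrt_sqrt _ (Rlt_le _ _ Ha)).
  assert (Hp := sqrt_lt_R0 _ Ha).
  set (a := sqrt ((n+x)/2)) in *.
  unfold Cmult; simpl. f_equal.
  - field_simplify; [|lra]. 
    replace (a^4) with ((a*a)*(a*a)) by ring. replace (a^2) with (a*a) by ring. rewrite Hs.
    field_simplify; [|lra]. 
    replace (n^2) with (n*n) by ring. rewrite Hn. field. lra.
  - field. lra.
Qed.

Definition csqrt (z : C) : C :=
  if Rlt_dec 0 (nrm z + fst z) then Fs z else (0, sqrt (- fst z)).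

Lemma csqrt_sq z : (csqrt z * csqrt z)%C = z.
Proof.
  unfold csqrt. destruct Rlt_dec as [H|H]. { apply Fs_sq. exact H. }
  destruct z as [x y]. simpl in *.
  assert (Hg := nrm_ge (x,y)). simpl in Hg.
  assert (Hn := nrm_sq (x,y)). simpl in Hn.
  assert (Hx : x <= 0) by (destruct (Rabs_pos x); lra).
  assert (nrm (x,y) = -x). { rewrite Rabs_left1 in Hg by lra. lra. }
  assert (y = 0) by nra. subst y.
  unfold Cmult; simpl. f_equal.
  - rewrite Rmult_0_l. replace (0 - sqrt (-x) * sqrt (-x)) with (- (sqrt (-x) * sqrt (-x))) by ring.
    rewrite sqrt_sqrt; lra.
  - ring.
Qed.

Definition sq (d w : C) : C := (csqrt (- d) * Fs (w / (- d)))%C.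

Lemma sq_sq (d w : C) : d <> 0%C -> good (w / - d)%C -> (sq d w * sq d w)%C = w.
Proof.
  destruct d as [dx dy]. destruct w as [wx wy]. intros Hd Hg. unfold sq.
  assert (E: forall a b : C, ((a*b)*(a*b) = (a*a)*(b*b))%C) by (intros; ring). rewrite E.
  rewrite csqrt_sq, Fs_sq by auto.
  assert (dx*dx+dy*dy <> 0).
  { intros Hz0. apply Hd. assert (dx = 0) by nra. assert (dy = 0) by nra. subst; reflexivity. }
  unfold Cdiv, Cmult, Cinv, Copp; simpl. f_equal; field; nra.
Qed.

Lemma good_of_ray (d w : C) : d <> 0%C ->
  (forall l, 0 <= l -> w <> (l * fst d, l * snd d)) -> good (w / - d)%C.
Proof.
  intros Hd Hr. unfold good.
  assert (Hw : w = ((w / - d) * - d)%C).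
  { field. intros H0. apply Hd. replace d with (- - d)%C by ring. rewrite H0. ring. }
  revert Hw. generalize (w / - d)%C. intros q Hw.
  assert (Hg := nrm_ge q). assert (Hn := nrm_sq q).
  destruct (Rlt_le_dec 0 (nrm q + fst q)) as [H|H]; [auto|].
  exfalso.
  assert (Hq1 : fst q <= 0) by (destruct (Rabs_pos (fst q)); lra).
  assert (Hq2 : nrm q = - fst q). { rewrite Rabs_left1 in Hg by lra. lra. }
  assert (Hsq : snd q = 0) by nra.
  apply (Hr (- fst q)); [lra|].
  rewrite Hw. destruct q as [qx qy]. destruct d as [dx dy]. simpl in *. subst qy.
  unfold Cmult, Copp; simpl. f_equal; ring.
Qed.

Lemma cC_pair (f g : R -> R) t : continuous f t -> continuous g t ->
  @continuous R_UniformSpace C_UniformSpace (fun t => (f t, g t)) t.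
Proof.
  intros Hf Hg P [eps HP].
  assert (H1 := Hf _ (locally_ball (f t) eps)).
  assert (H2 := Hg _ (locally_ball (g t) eps)).
  unfold filtermap in *.
  generalize (filter_and _ _ H1 H2). apply filter_imp. intros x [Hx1 Hx2].
  apply HP. split; auto.
Qed.

Lemma cC_fst (f : R -> C) t : @continuous R_UniformSpace C_UniformSpace f t ->
  continuous (fun t => fst (f t)) t.
Proof. intros Hf. apply (continuous_comp f fst t Hf (c_fst (f t))). Qed.
Lemma cC_snd (f : R -> C) t : @continuous R_UniformSpace C_UniformSpace f t ->
  continuous (fun t => snd (f t)) t.
Proof. intros Hf. apply (continuous_comp f snd t Hf (c_snd (f t))). Qed.

Lemma c_id (t : R) : continuous (fun x : R => x) t.
Proof. apply continuous_id. Qed.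

Ltac rtac := match goal with
  | |- continuous (fun _ => ?c) _ => apply c_const
  | |- continuous (fun w => w) _ => apply c_id
  | |- continuous (Rmult ?c) _ => apply (c_mult (fun _ => c) (fun w => w)); [apply c_const| apply c_id]
  | |- continuous (Rplus ?c) _ => apply (c_plus (fun _ => c) (fun w => w)); [apply c_const| apply c_id]
  | |- continuous (fun w => fst (?f w)) _ => apply cC_fst; try assumption
  | |- continuous (fun w => snd (?f w)) _ => apply cC_snd; try assumption
  | |- continuous (fun w => _ + _) _ => apply c_plus; rtac
  | |- continuous (fun w => _ - _) _ => apply c_minus; rtac
  | |- continuous (fun w => _ * _) _ => apply c_mult; rtac
  | |- continuous (fun w => - _) _ => apply c_opp; rtac
  | |- continuous (fun w => cos _) _ => apply continuous_cos_comp; rtac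
  | |- continuous (fun w => sin _) _ => apply continuous_sin_comp; rtac
  | |- continuous (fun w => sqrt _) _ => apply continuous_sqrt_comp; rtac
  | |- continuous (fun w => _ / _) _ => unfold Rdiv; rtac
  | |- continuous (fun w => / _) _ => apply continuous_Rinv_comp; [rtac|]
  | _ => try assumption
  end.

Definition ccont (f : R -> C) t := @continuous R_UniformSpace C_UniformSpace f t.

Lemma cC_mult (f g : R -> C) t : ccont f t -> ccont g t -> ccont (fun t => (f t * g t)%C) t.
Proof. intros Hf Hg. unfold Cmult. apply cC_pair; rtac. Qed.
Lemma cC_plus (f g : R -> C) t : ccont f t -> ccont g t -> ccont (fun t => (f t + g t)%C) t.
Proof. intros Hf Hg. unfold Cplus. apply cC_pair; rtac. Qed.
Lemma cC_opp (f : R -> C) t : ccont f t -> ccont (fun t => (- f t)%C) t.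
Proof. intros Hf. unfold Copp. apply cC_pair; rtac. Qed.
Lemma cC_minus (f g : R -> C) t : ccont f t -> ccont g t -> ccont (fun t => (f t - g t)%C) t.
Proof. intros Hf Hg. unfold Cminus. apply cC_plus; auto. apply cC_opp; auto. Qed.
Lemma cC_const (c : C) t : ccont (fun _ => c) t.
Proof. apply continuous_const. Qed.
Lemma cC_RtoC (f : R -> R) t : continuous f t -> ccont (fun t => RtoC (f t)) t.
Proof. intros Hf. unfold RtoC. apply cC_pair; rtac. Qed.
Lemma cC_div_const (f : R -> C) (c : C) t : ccont f t -> ccont (fun t => (f t / c)%C) t.
Proof. intros Hf. unfold Cdiv. apply cC_mult; auto. apply cC_const. Qed.

Lemma cC_Fs (f : R -> C) t : ccont f t -> good (f t) -> ccont (fun t => Fs (f t)) t.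
Proof.
  intros Hf Hg. unfold Fs, sqa, nrm. unfold good, nrm in Hg.
  apply cC_pair; rtac.
  assert (0 < (sqrt (fst (f t) * fst (f t) + snd (f t) * snd (f t)) + fst (f t)) / 2) by lra.
  apply Rgt_not_eq. apply Rmult_lt_0_compat; [lra|]. apply sqrt_lt_R0. exact H.
Qed.

Definition c3 : C := RtoC (/ sqrt 3).

Definition hp (G : R -> C) (d1 d2 d3 r1 r2 r3 : C) (t : R) : C :=
  (c3 * sq d1 (G t - r1) * sq d2 (G t - r2) * sq d3 (G t - r3))%C.

Definition okd (d w : C) : Prop := d <> 0%C /\ good (w / - d)%C.

Lemma c3_sq : (c3 * c3)%C = (/ 3)%C.
Proof.
  unfold c3, RtoC, Cmult, Cinv; simpl.
  assert (H3 := sqrt_sqrt 3 ltac:(lra)). assert (0 < sqrt 3) by (apply sqrt_lt_R0; lra).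
  f_equal.
  - field_simplify; [|lra]. replace (sqrt 3 ^ 2) with (sqrt 3 * sqrt 3) by ring. rewrite H3. field.
  - rewrite Rmult_0_r, Rmult_0_l. unfold Rdiv. rewrite Ropp_0, Rmult_0_l. ring.
Qed.

Lemma hp_sq s G d1 d2 d3 r1 r2 r3 t :
  (forall u, P s u = (/ 3 * ((u - r1) * (u - r2) * (u - r3)))%C) ->
  okd d1 (G t - r1)%C -> okd d2 (G t - r2)%C -> okd d3 (G t - r3)%C ->
  (hp G d1 d2 d3 r1 r2 r3 t * hp G d1 d2 d3 r1 r2 r3 t)%C = P s (G t).
Proof.
  intros HP [D1 O1] [D2 O2] [D3 O3]. unfold hp. rewrite HP.
  assert (E : forall a b c e : C, ((e*a*b*c)*(e*a*b*c) = (e*e)*((a*a)*(b*b)*(c*c)))%C) by (intros; ring).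
  rewrite E, c3_sq, !sq_sq by auto. reflexivity.
Qed.

Lemma sq_cont (d r : C) (G : R -> C) t : ccont G t -> okd d (G t - r)%C ->
  ccont (fun t => sq d (G t - r)%C) t.
Proof.
  intros HG [Hd Hg]. unfold sq. apply cC_mult. apply cC_const.
  apply (cC_Fs (fun t => ((G t - r) / - d)%C)); auto.
  apply cC_div_const. apply cC_minus; auto. apply cC_const.
Qed.

Lemma hp_cont G d1 d2 d3 r1 r2 r3 t : ccont G t ->
  okd d1 (G t - r1)%C -> okd d2 (G t - r2)%C -> okd d3 (G t - r3)%C ->
  ccont (hp G d1 d2 d3 r1 r2 r3) t.
Proof.
  intros HG O1 O2 O3. unfold hp.
  apply cC_mult; [apply cC_mult; [apply cC_mult; [apply cC_const|]|]|];
    apply sq_cont; auto.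
Qed.

Lemma lerp_cont (A B : C) j t : ccont (fun t => lerp A B (t - j)) t.
Proof.
  unfold lerp. apply cC_plus. apply cC_const. apply cC_mult. apply cC_RtoC. rtac. apply cC_const.
Qed.

Lemma G1_cont t : ccont G1 t.
Proof. unfold G1. apply cC_pair; rtac. Qed.


Definition Iab (a b : R) (t : R) : Prop := a <= t <= b.
Definition cont_on (D : R -> Prop) (f : R -> C) : Prop :=
  forall t, D t -> filterlim f (within D (locally t)) (locally (f t)).

Definition epscont (D : R -> Prop) (f : R -> C) (t : R) : Prop :=
  forall eps : posreal, exists del : posreal, forall s, D s -> Rabs (s - t) < del ->
    @ball C_UniformSpace (f t) eps (f s).

Lemma epscont_iff (D : R -> Prop) (f : R -> C) (t : R) : filterlim f (within D (locally t)) (locally (f t)) <-> epscont D f t.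
Proof.
  split.
  - intros H eps. destruct (H _ (locally_ball (f t) eps)) as [del Hd].
    exists del. intros s Ds Hs. apply Hd; auto.
  - intros H P [eps HP]. destruct (H eps) as [del Hd].
    exists del. intros s Hs Ds. apply HP. apply Hd; auto.
Qed.

Lemma cont_on_of_full a b (f : R -> C) : (forall t, a <= t <= b -> ccont f t) -> cont_on (Iab a b) f.
Proof.
  intros H t Ht. apply epscont_iff. intros eps.
  destruct (H t Ht _ (locally_ball (f t) eps)) as [del Hd].
  exists del. intros s _ Hs. apply Hd. exact Hs.
Qed.

Lemma glue a c b (f g : R -> C) : a <= c <= b -> cont_on (Iab a c) f -> cont_on (Iab c b) g -> f c = g c ->
  cont_on (Iab a b) (fun t => if Rle_dec t c then f t else g t).
Proof.
  intros Hc Hf Hg Efg t Ht. apply epscont_iff. intros eps.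
  destruct (Rtotal_order t c) as [Hlt|[Heq|Hgt]].
  - destruct (proj1 (epscont_iff _ _ _) (Hf t ltac:(unfold Iab in *; lra)) eps) as [del Hd].
    assert (Hp : 0 < Rmin del (c - t)) by (apply Rmin_case; [apply cond_pos|lra]).
    exists (mkposreal _ Hp). intros s Hs Hst. simpl in Hst.
    assert (Hst1 : Rabs (s - t) < del) by (eapply Rlt_le_trans; [apply Hst|apply Rmin_l]).
    assert (Hst2 : Rabs (s - t) < c - t) by (eapply Rlt_le_trans; [apply Hst|apply Rmin_r]).
    assert (s < c) by (apply Rabs_def2 in Hst2; lra).
    destruct (Rle_dec t c); [|lra]. destruct (Rle_dec s c); [|lra].
    apply Hd; auto. unfold Iab in *; lra.
  - subst t.
    destruct (proj1 (epscont_iff _ _ _) (Hf c ltac:(unfold Iab in *; lra)) eps) as [d1 H1].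
    destruct (proj1 (epscont_iff _ _ _) (Hg c ltac:(unfold Iab in *; lra)) eps) as [d2 H2].
    assert (Hp : 0 < Rmin d1 d2) by (apply Rmin_case; apply cond_pos).
    exists (mkposreal _ Hp). intros s Hs Hst. simpl in Hst.
    assert (Hst1 : Rabs (s - c) < d1) by (eapply Rlt_le_trans; [apply Hst|apply Rmin_l]).
    assert (Hst2 : Rabs (s - c) < d2) by (eapply Rlt_le_trans; [apply Hst|apply Rmin_r]).
    destruct (Rle_dec c c); [|lra]. destruct (Rle_dec s c).
    + apply H1; auto. unfold Iab in *; lra.
    + rewrite Efg. apply H2; auto. unfold Iab in *; lra.
  - destruct (proj1 (epscont_iff _ _ _) (Hg t ltac:(unfold Iab in *; lra)) eps) as [del Hd].
    assert (Hp : 0 < Rmin del (t - c)) by (apply Rmin_case; [apply cond_pos|lra]).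
    exists (mkposreal _ Hp). intros s Hs Hst. simpl in Hst.
    assert (Hst1 : Rabs (s - t) < del) by (eapply Rlt_le_trans; [apply Hst|apply Rmin_l]).
    assert (Hst2 : Rabs (s - t) < t - c) by (eapply Rlt_le_trans; [apply Hst|apply Rmin_r]).
    assert (c < s) by (apply Rabs_def2 in Hst2; lra).
    destruct (Rle_dec t c); [lra|]. destruct (Rle_dec s c); [lra|].
    apply Hd; auto. unfold Iab in *; lra.
Qed.

Lemma cont_on_opp (D : R -> Prop) (f : R -> C) : cont_on D f -> cont_on D (fun t => (- f t)%C).
Proof.
  intros H t Dt. apply epscont_iff. intros eps.
  destruct (proj1 (epscont_iff _ _ _) (H t Dt) eps) as [del Hd].
  exists del. intros s Ds Hs. destruct (Hd s Ds Hs) as [B1 B2].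
  split.
  - change (Rabs (- fst (f s) - - fst (f t)) < eps).
    replace (- fst (f s) - - fst (f t)) with (- (fst (f s) - fst (f t))) by ring.
    rewrite Rabs_Ropp. exact B1.
  - change (Rabs (- snd (f s) - - snd (f t)) < eps).
    replace (- snd (f s) - - snd (f t)) with (- (snd (f s) - snd (f t))) by ring.
    rewrite Rabs_Ropp. exact B2.
Qed.

Lemma cont_on_sub (D E : R -> Prop) (f : R -> C) : (forall t, E t -> D t) -> cont_on D f -> cont_on E f.
Proof.
  intros HED H t Et. apply epscont_iff. intros eps.
  destruct (proj1 (epscont_iff _ _ _) (H t (HED t Et)) eps) as [del Hd].
  exists del. intros s Es Hs. apply Hd; auto.
Qed.

Lemma cont_on_const (D : R -> Prop) (c : C) : cont_on D (fun _ => c).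
Proof.
  intros t Dt. apply epscont_iff. intros eps. exists (mkposreal 1 Rlt_0_1).
  intros s _ _. apply ball_center.
Qed.

Lemma sq_sign (u v : C) : (u * u)%C = (v * v)%C -> u = v \/ u = (- v)%C.
Proof.
  intros H. destruct (classic (u = v)) as [E|E]; [left; auto|right].
  assert (Hz : ((u - v) * (u + v))%C = 0%C) by (replace ((u-v)*(u+v))%C with (u*u - v*v)%C by ring; rewrite H; ring).
  assert (Hd : (u - v)%C <> 0%C) by (intros Hc; apply E; replace u with ((u - v) + v)%C by ring; rewrite Hc; ring).
  assert (Hs : (u + v)%C = 0%C).
  { replace (u + v)%C with (((u - v) * (u + v)) / (u - v))%C by (field; auto). rewrite Hz. field; auto. }
  replace u with ((u + v) - v)%C by ring. rewrite Hs. ring.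
Qed.

Lemma glue_sq a c b (f : R -> C) (g h : R -> C) : a <= c <= b ->
  cont_on (Iab a c) g -> (forall t, a <= t <= c -> (g t * g t)%C = f t) ->
  cont_on (Iab c b) h -> (forall t, c <= t <= b -> (h t * h t)%C = f t) ->
  exists k, cont_on (Iab a b) k /\ (forall t, a <= t <= b -> (k t * k t)%C = f t) /\
    (forall t, a <= t <= c -> k t = g t).
Proof.
  intros Hc Hg Sg Hh Sh.
  assert (E : (g c * g c)%C = (h c * h c)%C) by (rewrite Sg, Sh; auto; lra).
  destruct (sq_sign _ _ E) as [E1|E1].
  - exists (fun t => if Rle_dec t c then g t else h t). split; [apply glue; auto|].
    split.
    + intros t Ht. destruct Rle_dec; [apply Sg|apply Sh]; lra.
    + intros t Ht. destruct Rle_dec; [auto|lra].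
  - exists (fun t => if Rle_dec t c then g t else (- h t)%C). split.
    { apply glue; auto. apply cont_on_opp; auto. }
    split.
    + intros t Ht. destruct Rle_dec; [apply Sg; lra|].
      replace (- h t * - h t)%C with (h t * h t)%C by ring. apply Sh; lra.
    + intros t Ht. destruct Rle_dec; [auto|lra].
Qed.

Lemma good_of_pos q : 0 < fst q -> good q.
Proof. intros H. unfold good. assert (Hg := nrm_ge q). assert (0 <= Rabs (fst q)) by apply Rabs_pos. lra. Qed.

Lemma fst_q (w z : C) : z <> 0%C ->
  fst ((w - 0) / - - z)%C = (fst w * fst z + snd w * snd z) / (fst z * fst z + snd z * snd z).
Proof.
  intros Hz. destruct w as [wx wy], z as [zx zy].
  assert (zx*zx+zy*zy <> 0).
  { intros H0. apply Hz. assert (zx = 0) by nra. assert (zy = 0) by nra. subst; reflexivity. }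
  unfold Cdiv, Cmult, Cinv, Cminus, Cplus, Copp; simpl. field. auto.
Qed.

Lemma good_near (f : R -> C) c : ccont f c -> f c <> 0%C ->
  exists del, 0 < del /\ forall s, Rabs (s - c) < del -> okd (- f c)%C (f s - 0)%C.
Proof.
  intros Hf Hz.
  destruct (f c) as [xc yc] eqn:Ec.
  assert (Hm : 0 < xc*xc+yc*yc).
  { destruct (Req_dec xc 0); destruct (Req_dec yc 0); subst; [exfalso; apply Hz; reflexivity| nra | nra | nra]. }
  assert (Ha : 0 <= Rabs xc) by apply Rabs_pos. assert (Hb : 0 <= Rabs yc) by apply Rabs_pos.
  set (eps := (xc*xc+yc*yc) / (2*(Rabs xc + Rabs yc) + 1)).
  assert (He : 0 < eps) by (apply Rdiv_lt_0_compat; lra).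
  assert (He2 : eps * (Rabs xc + Rabs yc) < xc*xc+yc*yc).
  { unfold eps. apply Rmult_lt_reg_r with (2*(Rabs xc + Rabs yc) + 1); [lra|].
    field_simplify; [|lra]. nra. }
  destruct (Hf _ (locally_ball (f c) (mkposreal _ He))) as [del Hd].
  exists del. split; [apply cond_pos|]. intros s Hs.
  assert (B := Hd s Hs). rewrite Ec in B. destruct B as [B1 B2].
  change (Rabs (fst (f s) - xc) < eps) in B1. change (Rabs (snd (f s) - yc) < eps) in B2.
  split.
  { intros H0. unfold Copp in H0; simpl in H0. injection H0; intros. nra. }
  apply good_of_pos. rewrite fst_q. 2:{ intros H0. injection H0; intros. nra. } simpl.
  apply Rdiv_lt_0_compat; [|lra].
  assert (E1 : Rabs ((fst (f s) - xc) * xc) <= eps * Rabs xc).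
  { rewrite Rabs_mult. apply Rmult_le_compat_r; [auto|lra]. }
  assert (E2 : Rabs ((snd (f s) - yc) * yc) <= eps * Rabs yc).
  { rewrite Rabs_mult. apply Rmult_le_compat_r; [auto|lra]. }
  apply Rabs_le_between' in E1 || idtac.
  assert (F1 := Rle_abs (-((fst (f s) - xc) * xc))). rewrite Rabs_Ropp in F1.
  assert (F2 := Rle_abs (-((snd (f s) - yc) * yc))). rewrite Rabs_Ropp in F2.
  nra.
Qed.

Lemma lift_sqrt (f : R -> C) a b : a <= b -> (forall t, a <= t <= b -> ccont f t) ->
  (forall t, a <= t <= b -> f t <> 0%C) ->
  exists g, cont_on (Iab a b) g /\ forall t, a <= t <= b -> (g t * g t)%C = f t.
Proof.
  intros Hab Hc Hnz.
  set (S := fun c => a <= c <= b /\ exists g, cont_on (Iab a c) g /\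
                      forall t, a <= t <= c -> (g t * g t)%C = f t).
  assert (Sa : S a).
  { split; [lra|]. exists (fun _ => csqrt (f a)). split; [apply cont_on_const|].
    intros t Ht. replace t with a by lra. apply csqrt_sq. }
  assert (HSb : bound S) by (exists b; intros c [Hc1 _]; lra).
  destruct (completeness S HSb (ex_intro _ a Sa)) as [cs [Hub Hlub]].
  assert (Hacs : a <= cs) by (apply Hub; auto).
  assert (Hcsb : cs <= b) by (apply Hlub; intros c [Hc1 _]; lra).
  destruct (good_near f cs (Hc cs (conj Hacs Hcsb)) (Hnz cs (conj Hacs Hcsb))) as [del [Hdel Hnear]].
  destruct (classic (exists c1, S c1 /\ cs - del/2 < c1)) as [[c1 [Sc1 Hc1]]|Hno].
  2:{ exfalso. assert (cs <= cs - del/2). { apply Hlub. intros c Sc. apply Rnot_lt_le. intros Hlt. apply Hno. exists c; auto. }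
      lra. }
  assert (Hc1cs : c1 <= cs) by (apply Hub; auto).
  destruct Sc1 as [Hc1r [g [Hg Sg]]].
  set (e := Rmin (cs + del/2) b).
  assert (He1 : e <= b) by apply Rmin_r.
  assert (He2 : e <= cs + del/2) by apply Rmin_l.
  assert (He3 : c1 <= e) by (unfold e; apply Rmin_case; lra).
  set (L := fun s => sq (- f cs)%C (f s - 0)%C).
  assert (HL : cont_on (Iab c1 e) L).
  { apply cont_on_of_full. intros s Hs. apply sq_cont. apply Hc; lra.
    apply Hnear. apply Rabs_def1; lra. }
  assert (SL : forall s, c1 <= s <= e -> (L s * L s)%C = f s).
  { intros s Hs. unfold L. destruct (Hnear s) as [Hd Hg']. { apply Rabs_def1; lra. }
    rewrite sq_sq by auto. ring. }
  destruct (glue_sq a c1 e f g L ltac:(lra) Hg Sg HL SL) as [k [Hk [Sk _]]].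
  assert (Se : S e) by (split; [lra|]; exists k; split; auto).
  assert (e <= cs) by (apply Hub; auto).
  assert (Eeb : e = b).
  { unfold e in *. revert H. apply Rmin_case_strong; intros; lra. }
  rewrite Eeb in Hk, Sk. exists k. split; auto.
Qed.

Lemma no_root_on_path s u : DDplus (21/4) s -> Cpath u -> P s u <> 0%C.
Proof.
  intros [Hb Hm] Hu HP. destruct s as [a b]. destruct u as [x y]. simpl in *.
  apply Cmod_lt_sq in Hm.
  assert (B := root_bound _ _ _ _ HP Hm).
  rewrite P_comp in HP. injection HP; intros H2 H1.
  assert (Hi : y*(x*x+2*x-y*y/3) < 0) by nra.
  apply Cpath_onPiece in Hu. unfold onPiece in Hu.
  decompose [or ex and] Hu; clear Hu.
  all: try lra.
  all: try (subst; nra).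
  all: try (subst x y; assert (0 <= (1/3 - 4/3*x0)*(1/3 - 4/3*x0)*(2*(1/3 - 4/3*x0)/3+2)) by (apply Rmult_le_pos; nra); nra).
  all: try (subst x y; assert (0 <= (-1 + 4/3*x0)*(-1 + 4/3*x0)*(2*(-1 + 4/3*x0)/3+2)) by (apply Rmult_le_pos; nra); nra).
  - subst x y. set (e := 1/3 - 4/3*x0) in *. assert (0 <= e*e*(2*e/3+2)) by (apply Rmult_le_pos; [exact (Rle_0_sqr e)|unfold e; lra]). nra.
  - assert (Hx : x = -2 - y) by lra. subst x. assert (0 <= y*y*(2*y/3+2)) by (apply Rmult_le_pos; [exact (Rle_0_sqr y)| lra]). nra.
Qed.

Lemma P_cont s (G : R -> C) t : ccont G t -> ccont (fun t => P s (G t)) t.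
Proof.
  intros HG. unfold P. apply cC_plus; [apply cC_plus|apply cC_const].
  - apply cC_div_const. apply cC_mult; [apply cC_mult|]; auto.
  - apply cC_mult; auto.
Qed.

Lemma piece_lift s (G : R -> C) j : DDplus (21/4) s -> 0 <= j -> j + 1 <= 7 ->
  (forall t, ccont G t) -> (forall t, j <= t <= j+1 -> gamma t = G t) ->
  exists g, cont_on (Iab j (j+1)) g /\
    forall t, j <= t <= j+1 -> (g t * g t)%C = P s (gamma t).
Proof.
  intros Hs Hj Hj7 HG HgG.
  destruct (lift_sqrt (fun t => P s (G t)) j (j+1)) as [g [Hg Sg]].
  - lra.
  - intros; apply P_cont; auto.
  - intros t Ht. rewrite <- HgG by auto. apply no_root_on_path; auto.
    exists t. split; [lra|auto].
  - exists g. split; auto. intros t Ht. rewrite HgG by auto. apply Sg; auto.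
Qed.

Lemma G0_cont t : ccont G0 t.
Proof. apply (continuous_ext (fun t => lerp u0 (-6,0) (t - 0))). { intros; unfold G0; f_equal; ring. } apply lerp_cont. Qed.
Lemma G2_cont t : ccont G2 t. Proof. apply lerp_cont. Qed.
Lemma G3_cont t : ccont G3 t. Proof. apply lerp_cont. Qed.
Lemma G4_cont t : ccont G4 t. Proof. apply lerp_cont. Qed.
Lemma G5_cont t : ccont G5 t. Proof. apply lerp_cont. Qed.
Lemma G6_cont t : ccont G6 t. Proof. apply lerp_cont. Qed.

Lemma glue_step s j c K g : 0 <= j <= c ->
  cont_on (Iab 0 j) K -> (forall t, 0 <= t <= j -> (K t * K t)%C = P s (gamma t)) ->
  cont_on (Iab j c) g -> (forall t, j <= t <= c -> (g t * g t)%C = P s (gamma t)) ->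
  exists K', cont_on (Iab 0 c) K' /\ (forall t, 0 <= t <= c -> (K' t * K' t)%C = P s (gamma t)).
Proof.
  intros Hj HK SK Hg Sg.
  destruct (glue_sq 0 j c (fun t => P s (gamma t)) K g ltac:(lra) HK SK Hg Sg) as [k [Hk [Sk _]]].
  exists k; auto.
Qed.

Lemma branch_exists s : DDplus (21/4) s -> exists w, branch s w.
Proof.
  intros Hs.
  destruct (piece_lift s G0 0 Hs ltac:(lra) ltac:(lra) G0_cont ltac:(intros; apply gamma_0; lra)) as [g0 [H0 S0]].
  destruct (piece_lift s G1 1 Hs ltac:(lra) ltac:(lra) G1_cont ltac:(intros; apply gamma_1; lra)) as [g1 [H1 S1]].
  destruct (piece_lift s G2 2 Hs ltac:(lra) ltac:(lra) G2_cont ltac:(intros; apply gamma_2; lra)) as [g2 [H2 S2]].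
  destruct (piece_lift s G3 3 Hs ltac:(lra) ltac:(lra) G3_cont ltac:(intros; apply gamma_3; lra)) as [g3 [H3 S3]].
  destruct (piece_lift s G4 4 Hs ltac:(lra) ltac:(lra) G4_cont ltac:(intros; apply gamma_4; lra)) as [g4 [H4 S4]].
  destruct (piece_lift s G5 5 Hs ltac:(lra) ltac:(lra) G5_cont ltac:(intros; apply gamma_5; lra)) as [g5 [H5 S5]].
  destruct (piece_lift s G6 6 Hs ltac:(lra) ltac:(lra) G6_cont ltac:(intros; apply gamma_6; lra)) as [g6 [H6 S6]].
  replace (0 + 1) with 1 in H0, S0 by ring.
  replace (1 + 1) with 2 in H1, S1 by ring.
  replace (2 + 1) with 3 in H2, S2 by ring.
  replace (3 + 1) with 4 in H3, S3 by ring.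
  replace (4 + 1) with 5 in H4, S4 by ring.
  replace (5 + 1) with 6 in H5, S5 by ring.
  replace (6 + 1) with 7 in H6, S6 by ring.
  destruct (glue_step s 1 2 g0 g1 ltac:(lra) H0 S0 H1 S1) as [K2 [HK2 SK2]].
  destruct (glue_step s 2 3 K2 g2 ltac:(lra) HK2 SK2 H2 S2) as [K3 [HK3 SK3]].
  destruct (glue_step s 3 4 K3 g3 ltac:(lra) HK3 SK3 H3 S3) as [K4 [HK4 SK4]].
  destruct (glue_step s 4 5 K4 g4 ltac:(lra) HK4 SK4 H4 S4) as [K5 [HK5 SK5]].
  destruct (glue_step s 5 6 K5 g5 ltac:(lra) HK5 SK5 H5 S5) as [K6 [HK6 SK6]].
  destruct (glue_step s 6 7 K6 g6 ltac:(lra) HK6 SK6 H6 S6) as [K7 [HK7 SK7]].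
  exists K7. split.
  - exact HK7.
  - exact SK7.
Qed.

Lemma gamma_bound t : 0 <= t <= 7 -> Cmod (gamma t) <= 6.
Proof.
  intros Ht. assert (Hc : Cpath (gamma t)) by (exists t; auto).
  destruct (gamma t) as [x y]. apply Cpath_onPiece in Hc. unfold onPiece in Hc.
  apply Cmod_le_of; [lra|]. decompose [or ex and] Hc; clear Hc; subst; nra.
Qed.

Lemma P_bound s u : Cmod s < 21/4 -> Cmod u <= 6 -> Cmod (P s u) <= 114.
Proof.
  intros Hs Hu. unfold P.
  assert (Hu0 : 0 <= Cmod u) by apply Cmod_ge_0.
  eapply Rle_trans; [apply Cmod_triangle|].
  eapply Rle_trans; [apply Rplus_le_compat_r; apply Cmod_triangle|].
  rewrite Cmod_div by (intros H0; injection H0; lra).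
  rewrite !Cmod_mult. rewrite Cmod_R, Rabs_right by lra.
  assert (Cmod u * Cmod u <= 36) by nra.
  assert (Cmod u * Cmod u * Cmod u <= 216) by nra.
  lra.
Qed.

Lemma w_bound s w t : DDplus (21/4) s -> branch s w -> 0 <= t <= 7 -> Cmod (w t) <= 11.
Proof.
  intros [_ Hs] [_ Hw] Ht.
  assert (H := P_bound s (gamma t) Hs (gamma_bound t Ht)).
  rewrite <- Hw in H by auto. rewrite Cmod_mult in H.
  assert (0 <= Cmod (w t)) by apply Cmod_ge_0. nra.
Qed.

Lemma dgamma_bound t : Cmod (dgamma t) <= 24.
Proof.
  assert (HP4 := PI_4). assert (HP0 := PI_RGT_0).
  unfold dgamma. repeat destruct Rle_dec;
  try (unfold u0, v1, v2, v3, v4, Cminus, Cplus, Copp; simpl; apply Cmod_le_of; lra).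
  apply Cmod_le_of; [lra|].
  assert (Hs := sin2_cos2 (PI*t)). unfold Rsqr in Hs.
  replace (- 6 * PI * sin (PI * t) * (- 6 * PI * sin (PI * t)) + 6 * PI * cos (PI * t) * (6 * PI * cos (PI * t)))
    with (36 * (PI*PI) * (sin (PI * t) * sin (PI * t) + cos (PI * t) * cos (PI * t))) by ring.
  rewrite Hs. nra.
Qed.

Definition clamp (t : R) : R := Rmax 0 (Rmin 7 t).
Lemma clamp_in t : 0 <= clamp t <= 7.
Proof. unfold clamp, Rmax, Rmin. repeat destruct Rle_dec; lra. Qed.
Lemma clamp_id t : 0 <= t <= 7 -> clamp t = t.
Proof. intros; unfold clamp, Rmax, Rmin. repeat destruct Rle_dec; lra. Qed.
Lemma clamp_lip a b : Rabs (clamp a - clamp b) <= Rabs (a - b).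
Proof.
  unfold clamp, Rmax, Rmin. repeat destruct Rle_dec;
  repeat (match goal with |- context [Rabs ?x] => destruct (Rcase_abs x) as [?|?];
            [rewrite (Rabs_left x) by auto|rewrite (Rabs_right x) by auto] end); lra.
Qed.

Lemma wc_cont (w : R -> C) tau : cont_on (Iab 0 7) w -> ccont (fun t => w (clamp t)) tau.
Proof.
  intros Hw P [eps HP].
  destruct (proj1 (epscont_iff _ _ _) (Hw (clamp tau) (clamp_in tau)) eps) as [del Hd].
  exists del. intros y Hy. apply HP. apply Hd. apply clamp_in.
  eapply Rle_lt_trans; [apply clamp_lip|]. exact Hy.
Qed.

Definition dG1 (t : R) : C := (- 6 * PI * sin (PI * t), 6 * PI * cos (PI * t)).

Lemma dG1_cont t : ccont dG1 t.
Proof. unfold dG1. apply cC_pair; rtac. Qed.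

Lemma ex_piece (pr : C -> R) (hpr : forall f t, ccont f t -> continuous (fun t => pr (f t)) t)
  (w : R -> C) j (dG : R -> C) : cont_on (Iab 0 7) w -> 0 <= j -> j + 1 <= 7 ->
  (forall tau, ccont dG tau) -> (forall tau, j < tau < j+1 -> dgamma tau = dG tau) ->
  ex_RInt (fun tau => pr (w tau * dgamma tau)%C) j (j+1).
Proof.
  intros Hw Hj Hj7 HdG Ed.
  apply (ex_RInt_ext (fun tau => pr (w (clamp tau) * dG tau)%C)).
  { intros x Hx. rewrite Rmin_left in Hx by lra. rewrite Rmax_right in Hx by lra.
    rewrite clamp_id by lra. rewrite Ed by lra. reflexivity. }
  apply (@ex_RInt_continuous R_CompleteNormedModule). intros z _.
  apply (hpr (fun tau => (w (clamp tau) * dG tau)%C)).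
  apply cC_mult; [apply wc_cont; auto|apply HdG].
Qed.

Ltac dsolve := intros; unfold dgamma; repeat destruct Rle_dec; try lra; try reflexivity.

Lemma ex_all (pr : C -> R) (hpr : forall f t, ccont f t -> continuous (fun t => pr (f t)) t)
  (w : R -> C) t : cont_on (Iab 0 7) w -> 0 <= t <= 7 ->
  ex_RInt (fun tau => pr (w tau * dgamma tau)%C) 0 t.
Proof.
  intros Hw Ht.
  apply (@ex_RInt_Chasles_1 R_CompleteNormedModule _ 0 t 7); [lra|].
  assert (E0 := ex_piece pr hpr w 0 (fun _ => ((-6, 0) - u0)%C) Hw ltac:(lra) ltac:(lra)
     (fun tau => cC_const _ tau) ltac:(dsolve)).
  assert (E1 := ex_piece pr hpr w 1 dG1 Hw ltac:(lra) ltac:(lra) dG1_cont ltac:(dsolve)).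
  assert (E2 := ex_piece pr hpr w 2 (fun _ => (v1 - (6, 0))%C) Hw ltac:(lra) ltac:(lra)
     (fun tau => cC_const _ tau) ltac:(dsolve)).
  assert (E3 := ex_piece pr hpr w 3 (fun _ => (v2 - v1)%C) Hw ltac:(lra) ltac:(lra)
     (fun tau => cC_const _ tau) ltac:(dsolve)).
  assert (E4 := ex_piece pr hpr w 4 (fun _ => (v3 - v2)%C) Hw ltac:(lra) ltac:(lra)
     (fun tau => cC_const _ tau) ltac:(dsolve)).
  assert (E5 := ex_piece pr hpr w 5 (fun _ => (v4 - v3)%C) Hw ltac:(lra) ltac:(lra)
     (fun tau => cC_const _ tau) ltac:(dsolve)).
  assert (E6 := ex_piece pr hpr w 6 (fun _ => (u0 - v4)%C) Hw ltac:(lra) ltac:(lra)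
     (fun tau => cC_const _ tau) ltac:(dsolve)).
  replace (0+1) with 1 in E0 by ring. replace (1+1) with 2 in E1 by ring.
  replace (2+1) with 3 in E2 by ring. replace (3+1) with 4 in E3 by ring.
  replace (4+1) with 5 in E4 by ring. replace (5+1) with 6 in E5 by ring.
  replace (6+1) with 7 in E6 by ring.
  apply (ex_RInt_Chasles _ 0 6 7); auto.
  apply (ex_RInt_Chasles _ 0 5 6); auto.
  apply (ex_RInt_Chasles _ 0 4 5); auto.
  apply (ex_RInt_Chasles _ 0 3 4); auto.
  apply (ex_RInt_Chasles _ 0 2 3); auto.
  apply (ex_RInt_Chasles _ 0 1 2); auto.
Qed.

Lemma J_bound s w t : DDplus (21/4) s -> branch s w -> 0 <= t <= 7 -> Cmod (J w t) <= 4000.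
Proof.
  intros Hs Hb Ht.
  assert (Hw : cont_on (Iab 0 7) w) by exact (proj1 Hb).
  assert (Hint : forall tau, 0 <= tau <= t -> Cmod (w tau * dgamma tau)%C <= 264).
  { intros tau Htau. rewrite Cmod_mult.
    assert (H1 := w_bound s w tau Hs Hb ltac:(lra)). assert (H2 := dgamma_bound tau).
    assert (0 <= Cmod (w tau)) by apply Cmod_ge_0. assert (0 <= Cmod (dgamma tau)) by apply Cmod_ge_0.
    nra. }
  assert (HA : Rabs (RInt (fun x => Re (w x * dgamma x)%C) 0 t) <= (t - 0) * 264).
  { apply abs_RInt_le_const; [lra| |].
    - apply (ex_all Re (fun f t H => cC_fst f t H)); auto.
    - intros tau Htau. eapply Rle_trans; [apply re_le_Cmod|]. apply Hint; auto. }
  assert (HB : Rabs (RInt (fun x => Im (w x * dgamma x)%C) 0 t) <= (t - 0) * 264).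
  { apply abs_RInt_le_const; [lra| |].
    - apply (ex_all Im (fun f t H => cC_snd f t H)); auto.
    - intros tau Htau. eapply Rle_trans; [apply im_le_Cmod|]. apply Hint; auto. }
  unfold J, CRInt.
  set (A := RInt (fun x => Re (w x * dgamma x)%C) 0 t) in *.
  set (B := RInt (fun x => Im (w x * dgamma x)%C) 0 t) in *.
  apply Cmod_le_of; [lra|].
  assert (HA' : -1848 <= A <= 1848) by (revert HA; unfold Rabs; destruct Rcase_abs; intros; lra).
  assert (HB' : -1848 <= B <= 1848) by (revert HB; unfold Rabs; destruct Rcase_abs; intros; lra).
  simpl. nra.
Qed.

Theorem corollary1 :
  (forall s r1 r2 r3 : C,
     DDplus (21/4) s -> labelled_roots s r1 r2 r3 ->
     (* (i) *)
     (DDminus 5 r3 /\ DDminus 5 r1 /\ DDplus 5 r2) /\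
     (* (ii) *)
     (inside C0hat r2 /\ inside C0hat r3 /\ outside C0hat r1) /\
     (* (iii), first part *)
     (inside Cpath r1 /\ inside Cpath r3 /\ outside Cpath r2)) /\
  (* (iii), second part: alpha < oo *)
  (exists alpha : R,
     forall s : C, DDplus (21/4) s ->
       (exists w, branch s w) /\
       (forall w, branch s w ->
          forall t, 0 <= t <= 7 -> Cmod (J w t) <= alpha)).
Proof.
  split.
  - intros s r1 r2 r3 Hs HL. exact (part1 s r1 r2 r3 Hs HL).
  - exists 4000. intros s Hs. split.
    + apply branch_exists; auto.
    + intros w Hb t Ht. apply (J_bound s w t); auto.
Qed.
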